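(* The element $(\mathcal{X}^2)^4\in\Lambda$ is a nonzero element of maximal rank, i.e. $(\mathcal{X}^2)^4=c\,\prod_{a,A}\psi^a_A\prod_{a,A}\overline{\psi^a_A}$ (product of all 24 generators in a fixed order) with $c\neq0$.
   Context: Colour indices $A,B,\dots\in\{1,2,3\}$; bispinor indices $a,b,\dots\in\{1,2,\dot1,\dot2\}$; summation over repeated indices; spacetime indices raised/lowered with $\eta=\mathrm{diag}(1,-1,-1,-1)$. $\Lambda$ is the complex Grassmann algebra generated by the 24 anticommuting generators $\psi^a_A,\overline{\psi^a_A}$. $g^{AB}=\delta^{AB}$. Spinor structures: $\sigma^\mu=(I,\sigma^1,\sigma^2,\sigma^3)$, $\tilde\sigma^\mu=(I,-\sigma^k)$; in the ordering $(1,2,\dot1,\dot2)$, $(\gamma^\mu)^a{}_b=\begin{pmatrix}0&\tilde\sigma^\mu\\ \sigma^\mu&0\end{pmatrix}$, $\epsilon_{ab}=\begin{pmatrix}\varepsilon&0\\0&-\varepsilon\end{pmatrix}$ with $\varepsilon=\begin{pmatrix}0&1\\-1&0\end{pmatrix}$, $(\gamma^\mu)_{cb}:=(\gamma^\mu)^a{}_b\epsilon_{ac}$, $\beta_{ab}=\begin{pmatrix}0&I_2\\ I_2&0\end{pmatrix}$, and $\beta_{abcd}:=\tfrac12\overline{(\gamma_\mu)_{ab}}(\gamma^\mu)_{cd}$. Define $\mathcal{J}^{ab}:=\overline{\psi^a_A}g^{AB}\psi^b_B$ and $\mathcal{X}^2:=4\beta_{bcef}\beta_{ad}\{\mathcal{J}^{ad}\mathcal{J}^{be}\mathcal{J}^{cf}+2\mathcal{J}^{ae}\mathcal{J}^{bf}\mathcal{J}^{cd}\}$.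 *)

(* Defs.v *)
From HB Require Import structures.
From mathcomp Require Import all_boot all_order all_algebra.
Set Implicit Arguments. Unset Strict Implicit. Unset Printing Implicit Defensive.
Import Order.TTheory GRing.Theory Num.Theory.
Local Open Scope ring_scope.

Section Grassmann.
Variable C : numClosedFieldType.

(* An element of Lambda: coefficients on the monomial basis e_S, S a subset
   of the 24 generators, e_S = product of generators of S in increasing order. *)
Notation Lam := {ffun {set 'I_24} -> C}.

(* sign of reordering e_A e_B into e_(A :|: B) for disjoint A, B *)
Definition gsign (A B : {set 'I_24}) : C :=
  (-1) ^+ #|[set p : 'I_24 * 'I_24 | [&& p.1 \in A, p.2 \in B & (p.2 < p.1)%N]]|.

Definition gmul (x y : Lam) : Lam :=
  [ffun S : {set 'I_24} => \sum_(A : {set 'I_24} | A \subset S)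
                gsign A (S :\: A) * x A * y (S :\: A)].

Definition gone : Lam := [ffun S : {set 'I_24} => if S == set0 then 1 else 0].
Definition gen (i : 'I_24) : Lam := [ffun S : {set 'I_24} => if S == [set i] then 1 else 0].
Definition gscale (k : C) (x : Lam) : Lam := [ffun S : {set 'I_24} => k * x S].
Definition gpow (n : nat) (x : Lam) : Lam := iter n (gmul x) gone.

(* generators: psi^a_A  |-> index 3a+A,  bar psi^a_A |-> 12+3a+A
   (bispinor order (1,2,1dot,2dot) = 0..3, colour 1..3 = 0..2) *)
Definition psi (a : 'I_4) (A : 'I_3) : Lam := gen (inord (3 * a + A)).
Definition psibar (a : 'I_4) (A : 'I_3) : Lam := gen (inord (12 + 3 * a + A)).

Definition topprod : Lam :=
  foldr gmul gone
    ([seq psi a A | a <- enum 'I_4, A <- enum 'I_3] ++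
     [seq psibar a A | a <- enum 'I_4, A <- enum 'I_3]).

Definition sigma (mu i j : nat) : C :=
  match mu, i, j with
  | 0, 0, 0 => 1 | 0, 1, 1 => 1
  | 1, 0, 1 => 1 | 1, 1, 0 => 1
  | 2, 0, 1 => - 'i | 2, 1, 0 => 'i
  | 3, 0, 0 => 1 | 3, 1, 1 => -1
  | _, _, _ => 0
  end.
Definition sigmat (mu i j : nat) : C :=
  if mu == 0%N then sigma mu i j else - sigma mu i j.

(* (gamma^mu)^a_b = [[0, sigmat^mu],[sigma^mu, 0]] *)
Definition gammaU (mu : 'I_4) (a b : 'I_4) : C :=
  if (a < 2)%N && (2 <= b)%N then sigmat mu a (b - 2)
  else if (2 <= a)%N && (b < 2)%N then sigma mu (a - 2) b
  else 0.

Definition eps2 (i j : nat) : C :=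
  match i, j with 0, 1 => 1 | 1, 0 => -1 | _, _ => 0 end.
(* epsilon_ab = diag(eps, -eps) *)
Definition epsB (a b : 'I_4) : C :=
  if (a < 2)%N && (b < 2)%N then eps2 a b
  else if (2 <= a)%N && (2 <= b)%N then - eps2 (a - 2) (b - 2)
  else 0.

(* (gamma^mu)_{cb} := (gamma^mu)^a_b epsilon_{ac} *)
Definition gammaL (mu c b : 'I_4) : C := \sum_(a < 4) gammaU mu a b * epsB a c.
Definition eta (mu : 'I_4) : C := if mu == 0 :> nat then 1 else -1.
(* (gamma_mu)_{cb} : spacetime index lowered with eta *)
Definition gammaLlow (mu c b : 'I_4) : C := eta mu * gammaL mu c b.

Definition beta4 (a b c d : 'I_4) : C :=
  2^-1 * \sum_(mu < 4) Num.conj (gammaLlow mu a b) * gammaL mu c d.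
(* beta_ab = [[0, I],[I, 0]] *)
Definition beta2 (a b : 'I_4) : C :=
  if ((a : nat) == b + 2)%N || ((b : nat) == a + 2)%N then 1 else 0.

Definition J (a b : 'I_4) : Lam := \sum_(A < 3) gmul (psibar a A) (psi b A).

Definition X2 : Lam :=
  gscale 4 (\sum_(a < 4) \sum_(b < 4) \sum_(c < 4) \sum_(d < 4) \sum_(e < 4) \sum_(f < 4)
    gscale (beta4 b c e f * beta2 a d)
      (gmul (gmul (J a d) (J b e)) (J c f)
       + gscale 2 (gmul (gmul (J a e) (J b f)) (J c d)))).

End Grassmann.

(* Main.v *)
Require Import Defs.
From HB Require Import structures.
From mathcomp Require Import all_boot all_order all_algebra.
Import GRing.Theory Num.Theory.
Local Open Scope ring_scope.
From Stdlib Require Import ZArith.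
From mathcomp Require Import ssrZ ring zify.
Local Close Scope ring_scope.
Set Implicit Arguments. Unset Strict Implicit. Unset Printing Implicit Defensive.

Module CompM.

Fixpoint disn (n : nat) (s t : seq bool) : bool :=
  if n is n'.+1 then ~~ (head false s && head false t) && disn n' (behead s) (behead t) else true.
Fixpoint born (n : nat) (s t : seq bool) : seq bool :=
  if n is n'.+1 then (head false s || head false t) :: born n' (behead s) (behead t) else [::].
Fixpoint cntn (n : nat) (s t : seq bool) (nb : nat) : nat :=
  if n is n'.+1 then (if head false s then nb else 0) + cntn n' (behead s) (behead t) (nb + head false t)
  else 0.
Definition sgnZ (s t : seq bool) : Z := if odd (cntn 24 s t 0) then (-1)%Z else 1%Z.
Definition term (p q : Z * seq bool) : Z * seq bool :=
  if disn 24 p.2 q.2 then ((sgnZ p.2 q.2 * p.1 * q.1)%Z, born 24 p.2 q.2) else (0%Z, p.2).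
Definition smulr (L1 L2 : seq (Z * seq bool)) := flatten [seq [seq term p q | q <- L2] | p <- L1].
Fixpoint kle (s t : seq bool) : bool :=
  match s, t with
  | x :: s', y :: t' => if x == y then kle s' t' else y
  | [::], _ => true
  | _ :: _, [::] => false
  end.
Fixpoint mrg (c : Z * seq bool) (l : seq (Z * seq bool)) : seq (Z * seq bool) :=
  match l with
  | [::] => [:: c]
  | d :: l' => if c.2 == d.2 then mrg ((c.1 + d.1)%Z, c.2) l' else c :: mrg d l'
  end.
Definition nzp (p : Z * seq bool) : bool := ~~ Z.eqb p.1 0.
Definition norm (L : seq (Z * seq bool)) :=
  filter nzp (match sort (fun p q => kle p.2 q.2) (filter nzp L) with [::] => [::] | c :: l => mrg c l end).
Definition mulL L1 L2 := norm (smulr L1 L2).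
Definition sc (k : Z) (L : seq (Z * seq bool)) := [seq ((k * p.1)%Z, p.2) | p <- L].
Definition key (k : nat) : seq bool := mkseq (fun j => j == k) 24.

Definition ord4 : seq 'I_4 := [:: @Ordinal 4 0 isT; @Ordinal 4 1 isT; @Ordinal 4 2 isT; @Ordinal 4 3 isT].
Definition ord3 : seq 'I_3 := [:: @Ordinal 3 0 isT; @Ordinal 3 1 isT; @Ordinal 3 2 isT].
Lemma enum4 : enum 'I_4 = ord4.
Proof. by apply: (inj_map val_inj); rewrite val_enum_ord. Qed.
Lemma enum3 : enum 'I_3 = ord3.
Proof. by apply: (inj_map val_inj); rewrite val_enum_ord. Qed.

Definition addG (p q : Z * Z) : Z * Z := ((p.1 + q.1)%Z, (p.2 + q.2)%Z).
Definition mulG (p q : Z * Z) : Z * Z := ((p.1 * q.1 - p.2 * q.2)%Z, (p.1 * q.2 + p.2 * q.1)%Z).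
Definition negG (p : Z * Z) : Z * Z := ((- p.1)%Z, (- p.2)%Z).
Definition scG (k : Z) (p : Z * Z) : Z * Z := ((k * p.1)%Z, (k * p.2)%Z).
Definition conjG (p : Z * Z) : Z * Z := (p.1, (- p.2)%Z).
Definition sumG (l : seq (Z * Z)) : Z * Z := foldr addG (0%Z, 0%Z) l.

Definition sigG (mu i j : nat) : Z * Z :=
  match mu, i, j with
  | 0, 0, 0 => (1, 0)%Z | 0, 1, 1 => (1, 0)%Z
  | 1, 0, 1 => (1, 0)%Z | 1, 1, 0 => (1, 0)%Z
  | 2, 0, 1 => (0, -1)%Z | 2, 1, 0 => (0, 1)%Z
  | 3, 0, 0 => (1, 0)%Z | 3, 1, 1 => (-1, 0)%Z
  | _, _, _ => (0, 0)%Z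
  end.
Definition sigtG (mu i j : nat) : Z * Z := if mu == 0 then sigG mu i j else negG (sigG mu i j).
Definition gUG (mu a b : nat) : Z * Z :=
  if (a < 2) && (2 <= b) then sigtG mu a (b - 2)
  else if (2 <= a) && (b < 2) then sigG mu (a - 2) b
  else (0, 0)%Z.
Definition eps2Z (i j : nat) : Z := match i, j with 0, 1 => 1%Z | 1, 0 => (-1)%Z | _, _ => 0%Z end.
Definition epsZ (a b : nat) : Z :=
  if (a < 2) && (b < 2) then eps2Z a b
  else if (2 <= a) && (2 <= b) then (- eps2Z (a - 2) (b - 2))%Z
  else 0%Z.
Definition gLG (mu c b : nat) : Z * Z := sumG [seq scG (epsZ a c) (gUG mu a b) | a : 'I_4 <- ord4].
Definition etaZ (mu : nat) : Z := if mu == 0 then 1%Z else (-1)%Z.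
Definition b4G (a b c d : nat) : Z * Z :=
  sumG [seq mulG (conjG (scG (etaZ mu) (gLG mu a b))) (gLG mu c d) | mu : 'I_4 <- ord4].
Definition b4Z (a b c d : nat) : Z := Z.div (b4G a b c d).1 2.
Definition b2Z (a b : nat) : Z := if (a == b + 2) || (b == a + 2) then 1%Z else 0%Z.

Definition psiL (a A : nat) := [:: (1%Z, key (3 * a + A))].
Definition psibL (a A : nat) := [:: (1%Z, key (12 + 3 * a + A))].
Definition JL (a b : nat) := flatten [seq smulr (psibL a A) (psiL b A) | A : 'I_3 <- ord3].
Definition S6 (a b c d e f : nat) :=
  if Z.eqb (b4Z b c e f * b2Z a d) 0 then [::] else
  sc (b4Z b c e f * b2Z a d)
     (smulr (smulr (JL a d) (JL b e)) (JL c f) ++ sc 2 (smulr (smulr (JL a e) (JL b f)) (JL c d))).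
Definition X2L := norm (sc 4 (flatten [seq flatten [seq flatten [seq flatten [seq flatten [seq
   flatten [seq S6 a b c d e f | f : 'I_4 <- ord4] | e : 'I_4 <- ord4] | d : 'I_4 <- ord4] | c : 'I_4 <- ord4]
   | b : 'I_4 <- ord4] | a : 'I_4 <- ord4])).

Lemma b4G_check : all (fun a : 'I_4 => all (fun b : 'I_4 => all (fun c : 'I_4 => all (fun d : 'I_4 =>
  Z.eqb (b4G a b c d).1 (2 * b4Z a b c d) && Z.eqb (b4G a b c d).2 0) (ord4)) (ord4))
  (ord4)) (ord4).
Proof. by vm_compute. Qed.

Definition oneL := [:: (1%Z, nseq 24 false)].
Definition X2pow4L := mulL X2L (mulL X2L (mulL X2L (mulL X2L oneL))).
Lemma X2pow4L_val : X2pow4L = [:: (16307453952%Z, nseq 24 true)].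
Proof. by vm_compute. Qed.

Definition topL := foldr mulL oneL
  ([seq psiL a A | a : 'I_4 <- ord4, A : 'I_3 <- ord3] ++ [seq psibL a A | a : 'I_4 <- ord4, A : 'I_3 <- ord3]).
Lemma topL_val : topL = [:: (1%Z, nseq 24 true)].
Proof. by vm_compute. Qed.

End CompM.
Import CompM.

Module SpecM.

Lemma disnP n s t : disn n s t = all (fun i => ~~ (nth false s i && nth false t i)) (iota 0 n).
Proof.
elim: n s t => [//|n IH] s t /=.
rewrite IH -add1n iotaDl all_map; congr (_ && _).
by apply: eq_all => i /=; rewrite !nth_behead.
Qed.

Lemma bornP n s t i : nth false (born n s t) i = (i < n) && (nth false s i || nth false t i).
Proof.
elim: n s t i => [|n IH] s t i; first by rewrite nth_nil.
case: i => [|i] /=; first by case: s; case: t.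
by rewrite IH !nth_behead.
Qed.

Lemma cntnP n s t nb : cntn n s t nb =
  \sum_(i < n) nth false s i * (nb + \sum_(j < i) nth false t j).
Proof.
elim: n s t nb => [|n IH] s t nb; first by rewrite big_ord0.
rewrite big_ord_recl /= IH big_ord0 addn0; congr addn; first by case: s => [|[] ?] /=; rewrite ?mul1n ?mul0n.
apply: eq_bigr => i _; rewrite /bump /= add1n big_ord_recl !nth_behead addnA /=.
have -> : head false t = nth false t 0 by case: t.
by congr (_ * (_ + _)); apply: eq_bigr => j _; rewrite nth_behead /bump add1n.
Qed.

Definition setb (s : seq bool) : {set 'I_24} := [set i : 'I_24 | nth false s i].

Lemma card_pairs s t :
  #|[set p : 'I_24 * 'I_24 | [&& p.1 \in setb s, p.2 \in setb t & (p.2 < p.1)%nat]]| = cntn 24 s t 0.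
Proof.
rewrite cntnP.
have E (i : 'I_24) : \sum_(j < i) nth false t j = \sum_(j < 24) (j < i) * nth false t j.
  rewrite (big_ord_widen 24 (fun j => nat_of_bool (nth false t j)) (ltnW (ltn_ord i))) big_mkcond.
  by apply: eq_bigr => j _; case: (j < i)%nat; rewrite ?mul1n ?mul0n.
under eq_bigr => i _ do rewrite add0n E big_distrr.
rewrite pair_bigA /= -sum1_card big_mkcond /=.
apply: eq_bigr => [[i j]] _ /=; rewrite !inE.
by case: (nth false s i); case: (nth false t j); case: (j < i)%nat.
Qed.

Lemma disn_disjoint s t : disn 24 s t = [disjoint setb s & setb t].
Proof.
rewrite disnP -setI_eq0; apply/idP/idP.
  move/allP => h; apply/eqP/setP => i; rewrite !inE.
  by apply/negbTE/h; rewrite mem_iota add0n ltn_ord.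
move/eqP/setP => h; apply/allP => i; rewrite mem_iota add0n => /andP[_ lt].
by have := h (Ordinal lt); rewrite !inE /= => ->.
Qed.

Lemma setb_born s t : setb (born 24 s t) = setb s :|: setb t.
Proof. by apply/setP => i; rewrite !inE bornP ltn_ord. Qed.

Lemma setb_key (i : 'I_24) : setb (key i) = [set i].
Proof. by apply/setP => j; rewrite !inE nth_mkseq. Qed.

Lemma setb_nil : setb (nseq 24 false) = set0.
Proof. by apply/setP => j; rewrite !inE nth_nseq if_same. Qed.

End SpecM.
Import SpecM.

Local Open Scope ring_scope.


Section Z.
Variable C : numClosedFieldType.
Definition zc (z : Z) : C := (int_of_Z z)%:~R.

Lemma zcD a b : zc (Z.add a b) = zc a + zc b.
Proof. by rewrite /zc -intrD; congr intmul; exact: (raddfD int_of_Z a b). Qed.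
Lemma zcM a b : zc (Z.mul a b) = zc a * zc b.
Proof. by rewrite /zc -intrM; congr intmul; exact: (rmorphM int_of_Z a b). Qed.
Lemma zcN a : zc (Z.opp a) = - zc a.
Proof. by rewrite /zc -mulrNz; congr intmul; exact: (raddfN int_of_Z a). Qed.
Lemma zc0 : zc Z0 = 0. Proof. by []. Qed.
Lemma zc1 : zc (Zpos xH) = 1. Proof. by rewrite /zc /=. Qed.
Lemma zcN1 : zc (Zneg xH) = -1. Proof. by rewrite /zc /=. Qed.
Lemma zc2 : zc (Zpos (xO xH)) = 2. Proof. by rewrite /zc /=. Qed.
Lemma zc4 : zc (Zpos (xO (xO xH))) = 4. Proof. by rewrite /zc /=. Qed.
Lemma zc_pos p : zc (Zpos p) != 0.
Proof. by rewrite /zc /= pnatr_eq0 -lt0n; apply/ltP; apply: Pos2Nat.is_pos. Qed.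
Lemma zc_conj a : Num.conj (zc a) = zc a.
Proof. by rewrite /zc rmorph_int. Qed.
End Z.

Section G.
Variable C : numClosedFieldType.
Local Notation Lam := {ffun {set 'I_24} -> C}.
Local Notation zc := (@zc C).
Definition e (S : {set 'I_24}) : Lam := [ffun T => if T == S then 1 else 0].

Lemma addLE (x y : Lam) S : (x + y) S = x S + y S.
Proof. by rewrite /GRing.add /= ffunE. Qed.

Lemma zeroLE S : (0 : Lam) S = 0.
Proof. by rewrite ffunE. Qed.

Lemma gmul_e A B : gmul (e A) (e B) =
  if [disjoint A & B] then gscale (gsign C A B) (e (A :|: B)) else 0.
Proof.
apply/ffunP => S; rewrite !ffunE.
have H0 : forall A', A' != A -> gsign C A' (S :\: A') * e A A' * e B (S :\: A') = 0.
  by move=> A' /negbTE h; rewrite ffunE h mulr0 mul0r.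
case: (boolP (A \subset S)) => sAS.
  rewrite (bigD1 A) //= big1 ?addr0; last by move=> A' /andP[_ ]; apply: H0.
  rewrite !ffunE eqxx mulr1.
  case: (boolP [disjoint A & B]) => dAB.
    rewrite !ffunE.
    have -> : (S :\: A == B) = (S == A :|: B).
      apply/eqP/eqP => [<-|->]; first by rewrite -{1}(setID S A) (setIidPr sAS).
      by rewrite setDUl setDv set0U; apply/setDidPl; rewrite disjoint_sym.
    case: eqP => [h|_]; last by rewrite !mulr0.
    have dBA : [disjoint B & A] by rewrite disjoint_sym.
    by rewrite mulr1 h setDUl setDv set0U (setDidPl dBA) mulr1.
  rewrite zeroLE; case: eqP => h; last by rewrite mulr0.
  by case/negP: dAB; rewrite -h; rewrite -setI_eq0; apply/eqP/setP => x; rewrite !inE; case: (x \in A); rewrite ?andbF.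
rewrite big1; last first.
  move=> A' sA'; apply: H0; apply: contraNneq sAS => <-; exact: sA'.
case: ifP => dAB; rewrite ?zeroLE // !ffunE.
case: eqP => h; last by rewrite mulr0.
by move: sAS; rewrite h subsetUl.
Qed.


Lemma gscale_sum k I (r : seq I) (F : I -> Lam) :
  gscale k (\sum_(i <- r) F i) = \sum_(i <- r) gscale k (F i).
Proof.
apply/ffunP => S; rewrite ffunE !sum_ffunE mulr_sumr.
by apply: eq_bigr => i _; rewrite ffunE.
Qed.
Lemma gscaleD k (x y : Lam) : gscale k (x + y) = gscale k x + gscale k y.
Proof. by apply/ffunP => S; rewrite ffunE !addLE !ffunE mulrDr. Qed.
Lemma gscaleDk a b (x : Lam) : gscale (a + b) x = gscale a x + gscale b x.
Proof. by apply/ffunP => S; rewrite ffunE !addLE !ffunE mulrDl. Qed.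
Lemma gscaleA a b (x : Lam) : gscale a (gscale b x) = gscale (a * b) x.
Proof. by apply/ffunP => S; rewrite !ffunE mulrA. Qed.
Lemma gscale0 (x : Lam) : gscale 0 x = 0.
Proof. by apply/ffunP => S; rewrite !ffunE mul0r. Qed.
Lemma gscalex0 k : gscale k (0 : Lam) = 0.
Proof. by apply/ffunP => S; rewrite !ffunE mulr0. Qed.
Lemma gscale1 (x : Lam) : gscale 1 x = x.
Proof. by apply/ffunP => S; rewrite !ffunE mul1r. Qed.

Lemma gmul_suml I (r : seq I) (F : I -> Lam) (y : Lam) :
  gmul (\sum_(i <- r) F i) y = \sum_(i <- r) gmul (F i) y.
Proof.
apply/ffunP => S; rewrite ffunE sum_ffunE.
under eq_bigr do rewrite sum_ffunE mulr_sumr mulr_suml.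
rewrite exchange_big /=; apply: eq_bigr => i _; rewrite ffunE.
by [].
Qed.
Lemma gmul_sumr I (r : seq I) (F : I -> Lam) (x : Lam) :
  gmul x (\sum_(i <- r) F i) = \sum_(i <- r) gmul x (F i).
Proof.
apply/ffunP => S; rewrite ffunE sum_ffunE.
under eq_bigr do rewrite sum_ffunE mulr_sumr.
rewrite exchange_big /=; apply: eq_bigr => i _; rewrite ffunE.
by [].
Qed.
Lemma gmul_scalel k (x y : Lam) : gmul (gscale k x) y = gscale k (gmul x y).
Proof.
apply/ffunP => S; rewrite !ffunE mulr_sumr; apply: eq_bigr => A _.
by rewrite ffunE mulrCA !mulrA.
Qed.
Lemma gmul_scaler k (x y : Lam) : gmul x (gscale k y) = gscale k (gmul x y).
Proof.
apply/ffunP => S; rewrite !ffunE mulr_sumr; apply: eq_bigr => A _.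
by rewrite /gscale ffunE; ring.
Qed.

End G.


Section G3.
Variable C : numClosedFieldType.
Local Notation Lam := {ffun {set 'I_24} -> C}.
Local Notation zc := (@zc C).
Local Notation e := (@e C).

Definition interp (L : seq (Z * seq bool)) : Lam :=
  \sum_(p <- L) gscale (zc p.1) (e (setb p.2)).

Lemma interp_nil : interp [::] = 0.
Proof. by rewrite /interp big_nil. Qed.
Lemma interp_cons p L : interp (p :: L) = gscale (zc p.1) (e (setb p.2)) + interp L.
Proof. by rewrite /interp big_cons. Qed.
Lemma interp_cat L1 L2 : interp (L1 ++ L2) = interp L1 + interp L2.
Proof. by rewrite /interp big_cat. Qed.

Lemma gsign_setb s t : gsign C (setb s) (setb t) = zc (sgnZ s t).
Proof.
rewrite /gsign card_pairs -signr_odd /sgnZ.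
by case: odd; rewrite ?zcN1 ?zc1.
Qed.

Lemma term_ok p q :
  gmul (gscale (zc p.1) (e (setb p.2))) (gscale (zc q.1) (e (setb q.2))) =
  gscale (zc (term p q).1) (e (setb (term p q).2)).
Proof.
rewrite gmul_scalel gmul_scaler gmul_e /term -disn_disjoint.
case: ifP => _; cbn [fst snd]; last by rewrite zc0 gscale0 !gscalex0.
rewrite !gscaleA setb_born gsign_setb !zcM; congr gscale; ring.
Qed.

Lemma smulr_ok L1 L2 : gmul (interp L1) (interp L2) = interp (smulr L1 L2).
Proof.
rewrite /interp /smulr gmul_suml big_flatten big_map; apply: eq_bigr => p _.
by rewrite gmul_sumr big_map; apply: eq_bigr => q _; exact: term_ok.
Qed.

Lemma interp_filter L : interp (filter nzp L) = interp L.
Proof.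
rewrite /interp big_filter big_mkcond; apply: eq_bigr => p _.
by rewrite /nzp; case: Z.eqb_spec => [->|]; rewrite ?zc0 ?gscale0.
Qed.

Lemma interp_sort (le : rel (Z * seq bool)) L : interp (sort le L) = interp L.
Proof. by apply: perm_big; rewrite perm_sort. Qed.

Lemma interp_mrg c l : interp (mrg c l) = interp (c :: l).
Proof.
elim: l c => [//|d l IH] c; rewrite [mrg _ _]/=.
case: eqP => [E|_]; last by rewrite !interp_cons IH interp_cons.
by rewrite IH !interp_cons; cbn [fst snd]; rewrite zcD gscaleDk E addrA.
Qed.

Lemma norm_ok L : interp (norm L) = interp L.
Proof.
rewrite /norm interp_filter -[RHS]interp_filter -[RHS](interp_sort (fun p q => kle p.2 q.2)).
by case: sort => [//|c l]; rewrite interp_mrg.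
Qed.

Lemma mulL_ok L1 L2 : gmul (interp L1) (interp L2) = interp (mulL L1 L2).
Proof. by rewrite /mulL norm_ok smulr_ok. Qed.

Lemma sc_ok k L : interp (sc k L) = gscale (zc k) (interp L).
Proof.
rewrite /interp big_map gscale_sum; apply: eq_bigr => p _.
by rewrite zcM gscaleA.
Qed.

Lemma sumL n (F : 'I_n -> seq (Z * seq bool)) :
  \sum_(i < n) interp (F i) = interp (flatten [seq F i | i <- enum 'I_n]).
Proof.
by rewrite /interp big_flatten big_map big_enum.
Qed.

End G3.


Section G4.
Variable C : numClosedFieldType.
Local Notation Lam := {ffun {set 'I_24} -> C}.
Local Notation zc := (@zc C).
Local Notation e := (@e C).
Local Notation interp := (@interp C).

Definition gi (p : Z * Z) : C := zc p.1 + zc p.2 * 'i.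

Lemma zcB a b : zc (Z.sub a b) = zc a - zc b.
Proof. by rewrite /Z.sub zcD zcN. Qed.

Lemma gi_add p q : gi (addG p q) = gi p + gi q.
Proof. rewrite /gi /addG; cbn [fst snd]; rewrite !zcD; ring. Qed.
Lemma gi_mul p q : gi (mulG p q) = gi p * gi q.
Proof.
rewrite /gi /mulG; cbn [fst snd]; rewrite zcB !zcD !zcM.
have hi : 'i * 'i = -1 :> C by rewrite -expr2 sqrCi.
transitivity (zc p.1 * zc q.1 + zc p.2 * zc q.2 * ('i * 'i) + (zc p.1 * zc q.2 + zc p.2 * zc q.1) * 'i).
  by rewrite hi; ring.
ring.
Qed.
Lemma gi_sc k p : gi (scG k p) = zc k * gi p.
Proof. rewrite /gi /scG; cbn [fst snd]; rewrite !zcM; ring. Qed.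
Lemma gi_neg p : gi (negG p) = - gi p.
Proof. rewrite /gi /negG; cbn [fst snd]; rewrite !zcN; ring. Qed.
Lemma gi_conj p : Num.conj (gi p) = gi (conjG p).
Proof.
rewrite /gi /conjG; cbn [fst snd]; rewrite [zc p.2 * _]mulrC conjC_rect ?zcN; first ring.
  exact: realz.
exact: realz.
Qed.
Lemma gi0 : gi (Z0, Z0) = 0.
Proof. by rewrite /gi /= zc0 mul0r addr0. Qed.
Lemma gi_sum I (l : seq I) (F : I -> Z * Z) : \sum_(i <- l) gi (F i) = gi (sumG (map F l)).
Proof.
elim: l => [|x l IH]; first by rewrite big_nil /sumG /= gi0.
by rewrite big_cons IH /sumG /= gi_add.
Qed.

Lemma sum4 (F : 'I_4 -> C) : \sum_(i < 4) F i = \sum_(i <- ord4) F i.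
Proof. by rewrite -enum4 big_enum. Qed.

Lemma sigma_ok mu i j : sigma C mu i j = gi (sigG mu i j).
Proof.
rewrite /sigma /sigG.
case: mu => [|[|[|[|mu]]]]; case: i => [|[|i]]; case: j => [|[|j]];
  rewrite /gi /= ?zc0 ?zc1 ?zcN1; ring.
Qed.
Lemma sigmat_ok mu i j : sigmat C mu i j = gi (sigtG mu i j).
Proof. by rewrite /sigmat /sigtG; case: eqP => _; rewrite ?gi_neg sigma_ok. Qed.
Lemma gammaU_ok (mu a b : 'I_4) : gammaU C mu a b = gi (gUG mu a b).
Proof.
rewrite /gammaU /gUG; case: ifP => _; first exact: sigmat_ok.
by case: ifP => _; rewrite ?sigma_ok ?gi0.
Qed.
Lemma eps2_ok i j : eps2 C i j = zc (eps2Z i j).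
Proof.
by rewrite /eps2 /eps2Z; case: i => [|[|i]]; case: j => [|[|j]]; rewrite ?zc0 ?zc1 ?zcN1.
Qed.
Lemma epsB_ok (a b : 'I_4) : epsB C a b = zc (epsZ a b).
Proof.
rewrite /epsB /epsZ; case: ifP => _; first exact: eps2_ok.
by case: ifP => _; rewrite ?zc0 // zcN eps2_ok.
Qed.
Lemma gammaL_ok (mu c b : 'I_4) : gammaL C mu c b = gi (gLG mu c b).
Proof.
rewrite /gammaL /gLG sum4 -gi_sum; apply: eq_bigr => a _.
by rewrite gammaU_ok epsB_ok gi_sc mulrC.
Qed.
Lemma eta_ok (mu : 'I_4) : Defs.eta C mu = zc (etaZ mu).
Proof. by rewrite /Defs.eta /etaZ; case: eqP => _; rewrite ?zc1 ?zcN1. Qed.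

Lemma beta4_ok (a b c d : 'I_4) : beta4 C a b c d = zc (b4Z a b c d).
Proof.
have -> : beta4 C a b c d = 2^-1 * gi (b4G a b c d).
  rewrite /beta4 /b4G sum4 -gi_sum; congr (_ * _); apply: eq_bigr => mu _.
  by rewrite /gammaLlow !gammaL_ok eta_ok -gi_sc gi_conj gi_mul.
have := b4G_check.
move=> /allP /(_ a); rewrite -enum4 mem_enum => /(_ isT).
move=> /allP /(_ b); rewrite mem_enum => /(_ isT).
move=> /allP /(_ c); rewrite mem_enum => /(_ isT).
move=> /allP /(_ d); rewrite mem_enum => /(_ isT).
case: (b4G a b c d) => x y; cbn [fst snd] => /andP[/Z.eqb_spec -> /Z.eqb_spec ->].
rewrite /gi; cbn [fst snd]; rewrite zc0 mul0r addr0 zcM zc2 mulrA mulVf ?mul1r //.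
by rewrite pnatr_eq0.
Qed.

End G4.


Section G5.
Variable C : numClosedFieldType.
Local Notation Lam := {ffun {set 'I_24} -> C}.
Local Notation zc := (@zc C).
Local Notation e := (@e C).
Local Notation interp := (@interp C).

Lemma gen_e (i : 'I_24) : gen C i = e [set i].
Proof. by apply/ffunP => S; rewrite !ffunE. Qed.

Lemma interp1 k : interp [:: (Zpos xH, k)] = e (setb k).
Proof. by rewrite interp_cons interp_nil addr0 zc1 gscale1. Qed.

Lemma psi_ok (a : 'I_4) (A : 'I_3) : psi C a A = interp (psiL a A).
Proof.
rewrite /psi /psiL interp1 gen_e -setb_key inordK //.
by have := ltn_ord a; have := ltn_ord A; lia.
Qed.
Lemma psibar_ok (a : 'I_4) (A : 'I_3) : psibar C a A = interp (psibL a A).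
Proof.
rewrite /psibar /psibL interp1 gen_e -setb_key inordK //.
by have := ltn_ord a; have := ltn_ord A; lia.
Qed.

Lemma J_ok (a b : 'I_4) : J C a b = interp (JL a b).
Proof.
rewrite /J /JL; under eq_bigr do rewrite psi_ok psibar_ok smulr_ok.
by rewrite sumL enum3.
Qed.

Lemma beta2_ok (a d : 'I_4) : beta2 C a d = zc (b2Z a d).
Proof. by rewrite /beta2 /b2Z; case: ifP => _; rewrite ?zc0 ?zc1. Qed.

Lemma summand_ok (a b c d e f : 'I_4) :
  gscale (beta4 C b c e f * beta2 C a d)
      (gmul (gmul (J C a d) (J C b e)) (J C c f)
       + gscale 2 (gmul (gmul (J C a e) (J C b f)) (J C c d))) = interp (S6 a b c d e f).
Proof.
rewrite beta4_ok beta2_ok -zcM !J_ok !smulr_ok /S6.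
case: Z.eqb_spec => [->|_]; first by rewrite zc0 gscale0 interp_nil.
by rewrite sc_ok interp_cat sc_ok zc2.
Qed.

Lemma sum6 (G : 'I_4 -> 'I_4 -> 'I_4 -> 'I_4 -> 'I_4 -> 'I_4 -> seq (Z * seq bool)) :
  \sum_(a < 4) \sum_(b < 4) \sum_(c < 4) \sum_(d < 4) \sum_(e < 4) \sum_(f < 4)
     interp (G a b c d e f) =
  interp (flatten [seq flatten [seq flatten [seq flatten [seq flatten [seq
   flatten [seq G a b c d e f | f : 'I_4 <- ord4] | e : 'I_4 <- ord4] | d : 'I_4 <- ord4]
   | c : 'I_4 <- ord4] | b : 'I_4 <- ord4] | a : 'I_4 <- ord4]).
Proof.
rewrite -!enum4 -sumL; apply: eq_bigr => a _.
rewrite -sumL; apply: eq_bigr => b _.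
rewrite -sumL; apply: eq_bigr => c _.
rewrite -sumL; apply: eq_bigr => d _.
rewrite -sumL; apply: eq_bigr => e _.
by rewrite -sumL.
Qed.


Lemma X2_ok : X2 C = interp X2L.
Proof.
rewrite /X2 /X2L norm_ok sc_ok -sum6 zc4; congr gscale.
do 6! (apply: eq_bigr => ? _).
exact: summand_ok.
Qed.

Lemma gone_ok : gone C = interp oneL.
Proof.
by rewrite /oneL interp1 setb_nil; apply/ffunP => S; rewrite !ffunE.
Qed.

Lemma allpairs_mapE (T U : Type) (f : 'I_4 -> 'I_3 -> T) (g : U -> T) (h : 'I_4 -> 'I_3 -> U)
   s t : (forall x y, f x y = g (h x y)) ->
  [seq f x y | x <- s, y <- t] = map g [seq h x y | x <- s, y <- t].
Proof.
move=> H; elim: s => //= x s ->; rewrite map_cat -map_comp; congr (_ ++ _).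
by apply: eq_map => y; exact: H.
Qed.

Lemma foldr_interp Ls : foldr (@gmul C) (gone C) (map interp Ls) = interp (foldr mulL oneL Ls).
Proof.
elim: Ls => [|L Ls IH] /=; first exact: gone_ok.
by rewrite IH mulL_ok.
Qed.

Lemma topprod_ok : topprod C = interp topL.
Proof.
rewrite /topprod /topL enum4 enum3 -foldr_interp map_cat.
by rewrite (allpairs_mapE _ _ psi_ok) (allpairs_mapE _ _ psibar_ok).
Qed.

End G5.

Theorem lemma1 (C : numClosedFieldType) :
  exists c : C, c != 0 /\ gpow 4 (X2 C) = gscale c (topprod C).
Proof.
exists (zc C (Zpos 16307453952%positive)); split; first exact: zc_pos.
rewrite topprod_ok topL_val X2_ok.
have -> : gpow 4 (interp C X2L) = interp C X2pow4L.
  by rewrite /gpow /= gone_ok !mulL_ok.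
rewrite X2pow4L_val !interp_cons !interp_nil !addr0 zc1 gscale1.
by [].
Qed.
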